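(* Let $\mathcal{X}$ be a finite-dimensional real Hilbert space, $\rho\in\mathbb{R}$, and $f:\mathcal{X}\to\mathbb{R}$ $\rho$-convex. Let $(x^i)_{i\ge1}\subset\mathcal{X}$, $\bar x^i:=\frac1i\sum_{j=1}^i x^j$, and for $N\in\mathbb{N}$ let $\bar f:=\frac1N\sum_{i=1}^N f(x^i)$. Then for all $N\in\mathbb{N}$, \[ f(\bar x^N)\le\bar f-\frac{\rho}{2N}\sum_{i=1}^N\frac{i-1}{i}\|x^i-\bar x^{i-1}\|^2, \] and moreover for every $x\in\mathcal{X}$, \[ f(\bar x^N)\le\bar f+\max(0,-\rho)\left[\frac1N\sum_{i=1}^N\|x^i-x\|^2+\frac1N\sum_{i=1}^N\frac1i\sum_{j=1}^{i-1}\|x^j-x\|^2\right]. \]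
   Context: $f$ is $\rho$-convex if $f-\frac{\rho}{2}\|\cdot\|^2$ is convex. The $i=1$ term in the first sum has coefficient $0$ (so $\bar x^0$ plays no role). *)

(* Defs.v *)
(* The finite-dimensional real Hilbert space X is modelled as
   R^n = 'rV[R]_n with the Euclidean inner product (every finite-dimensional real
   Hilbert space is isometrically isomorphic to such a space). *)
From HB Require Import structures.
From mathcomp Require Import all_boot all_order all_algebra.
From mathcomp Require Import reals.
Set Implicit Arguments. Unset Strict Implicit. Unset Printing Implicit Defensive.
Import Order.TTheory GRing.Theory Num.Theory.
Local Open Scope ring_scope.

Definition dotv {R : realType} {n : nat} (u v : 'rV[R]_n) : R :=
  \sum_(k < n) u 0 k * v 0 k.
Definition sqnorm {R : realType} {n : nat} (v : 'rV[R]_n) : R := dotv v v.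

Definition convex_fun {R : realType} {n : nat} (g : 'rV[R]_n -> R) : Prop :=
  forall (x y : 'rV[R]_n) (t : R), 0 <= t -> t <= 1 ->
    g (t *: x + (1 - t) *: y) <= t * g x + (1 - t) * g y.

Definition rho_convex {R : realType} {n : nat} (rho : R) (f : 'rV[R]_n -> R) : Prop :=
  convex_fun (fun x => f x - rho / 2 * sqnorm x).

(* running average xbar i = (1/i) sum_{j=1}^i x^j (the sequence is indexed from 1;
   x 0 is unused); xbar 0 = 0 by this formula and plays no role. *)
Definition xbar {R : realType} {n : nat} (x : nat -> 'rV[R]_n) (i : nat) : 'rV[R]_n :=
  (i%:R)^-1 *: \sum_(1 <= j < i.+1) x j.

(* Main.v *)
Require Import Defs.
From HB Require Import structures.
From mathcomp Require Import all_boot all_order all_algebra.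
From mathcomp Require Import reals.
From mathcomp Require Import ring lra.
Import Order.TTheory GRing.Theory Num.Theory.
Local Open Scope ring_scope.

Section S.
Variables (R : realType) (n : nat).
Implicit Types (a b u v z : 'rV[R]_n).

Lemma sqnorm_comb (t : R) a b :
  sqnorm (t *: a + (1 - t) *: b) =
  t * sqnorm a + (1 - t) * sqnorm b - t * (1 - t) * sqnorm (a - b).
Proof.
rewrite /sqnorm /dotv !mulr_sumr -sumrN -!big_split /=.
by apply: eq_bigr => k _; rewrite !mxE; ring.
Qed.

Lemma sqnorm_ge0 a : 0 <= sqnorm a.
Proof. by rewrite /sqnorm /dotv; apply: sumr_ge0 => k _; rewrite -expr2 sqr_ge0. Qed.

Lemma sqnorm_add_le u v : sqnorm (u + v) <= 2 * sqnorm u + 2 * sqnorm v.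
Proof.
rewrite /sqnorm /dotv !mulr_sumr -!big_split /=.
apply: ler_sum => k _; rewrite !mxE.
have := sqr_ge0 (u 0 k - v 0 k); rewrite expr2; nra.
Qed.

Lemma xbar_rec (x : nat -> 'rV[R]_n) m :
  xbar x m.+1 = (m.+1%:R)^-1 *: x m.+1 + (1 - (m.+1%:R)^-1) *: xbar x m.
Proof.
case: m => [|m].
  by rewrite /xbar invr1 subrr scale0r addr0 big_nat1 scale1r.
rewrite /xbar big_nat_recr //= scalerDr addrC; congr (_ + _).
rewrite scalerA; congr (_ *: _).
have h : (m.+1%:R : R) != 0 by rewrite pnatr_eq0.
have h2 : (m.+2%:R : R) != 0 by rewrite pnatr_eq0.
rewrite !mulrSr in h h2 *; field.
by rewrite h2 h.
Qed.

Lemma sqnormB a b : sqnorm (a - b) = sqnorm (b - a).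
Proof. by rewrite /sqnorm /dotv; apply: eq_bigr => k _; rewrite !mxE; ring. Qed.

Variables (rho : R) (f : 'rV[R]_n -> R) (x : nat -> 'rV[R]_n).

Lemma tprops m : let t := (m.+1%:R : R)^-1 in 0 <= t /\ t <= 1.
Proof.
move=> t; split; first by rewrite invr_ge0 ler0n.
by rewrite /t invf_le1 // ?ler1n ?ltr0n.
Qed.

Lemma part1_ind (hc : rho_convex rho f) m :
  m%:R * f (xbar x m) <= \sum_(1 <= i < m.+1) f (x i)
    - rho / 2 * \sum_(1 <= i < m.+1) ((i%:R - 1) / i%:R) * sqnorm (x i - xbar x i.-1).
Proof.
elim: m => [|m IH]; first by rewrite !big_geq // mul0r mulr0 subrr.
rewrite !(big_nat_recr m.+1 1) //=.
have [t0 t1] := tprops m.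
set t := (m.+1%:R : R)^-1 in t0 t1.
have := hc (x m.+1) (xbar x m) t t0 t1; rewrite /= sqnorm_comb -xbar_rec => key.
set s := sqnorm (x m.+1 - xbar x m) in key *.
set M := (m%:R : R) in IH *.
have hM : 0 <= M by rewrite ler0n.
have eM : (m.+1%:R : R) = M + 1 by rewrite mulrSr.
rewrite eM.
have key2 : f (xbar x m.+1) <= t * f (x m.+1) + (1 - t) * f (xbar x m) - rho / 2 * (t * (1 - t)) * s.
  move: key; set A := f (xbar x m.+1); set B := f (x m.+1); set C := f (xbar x m).
  set sa := sqnorm (x m.+1); set sb := sqnorm (xbar x m).
  have -> : t * B + (1 - t) * C - rho / 2 * (t * (1 - t)) * s =
    (t * (B - rho / 2 * sa) + (1 - t) * (C - rho / 2 * sb)) + rho / 2 * (t * sa + (1 - t) * sb - t * (1 - t) * s).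
    by ring.
  move: (t * (B - rho / 2 * sa) + (1 - t) * (C - rho / 2 * sb)) => Y.
  move: (rho / 2 * (t * sa + (1 - t) * sb - t * (1 - t) * s)) => Z.
  lra.
have key3 := ler_wpM2l (addr_ge0 hM ler01) key2.
have E : (M + 1) * (t * f (x m.+1) + (1 - t) * f (xbar x m) - rho / 2 * (t * (1 - t)) * s)
   = f (x m.+1) + M * f (xbar x m) - rho / 2 * ((M + 1 - 1) / (M + 1) * s).
  rewrite /t eM; field; apply/lt0r_neq0; lra.
rewrite E in key3.
set S1 := \sum_(_ <= _ < _ | _) _ in IH *.
set S2 := \sum_(_ <= _ < _ | _) _ in IH *.
rewrite mulrDr; lra.
Qed.

Lemma jensen_ind z m :
  m%:R * sqnorm (xbar x m - z) <= \sum_(1 <= j < m.+1) sqnorm (x j - z).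
Proof.
elim: m => [|m IH]; first by rewrite !big_geq // mul0r.
rewrite (big_nat_recr m.+1 1) //=.
have [t0 t1] := tprops m.
set t := (m.+1%:R : R)^-1 in t0 t1.
have ex : xbar x m.+1 - z = t *: (x m.+1 - z) + (1 - t) *: (xbar x m - z).
  rewrite xbar_rec !scalerBr addrACA -opprD -scalerDl.
  have -> : t + (1 - t) = 1 by ring.
  by rewrite scale1r.
rewrite ex sqnorm_comb.
set M := (m%:R : R) in IH *.
have hM : 0 <= M by rewrite ler0n.
have eM : (m.+1%:R : R) = M + 1 by rewrite mulrSr.
have tp : 0 <= t * (1 - t) * sqnorm (x m.+1 - z - (xbar x m - z)).
  by rewrite mulr_ge0 ?sqnorm_ge0 // mulr_ge0 // subr_ge0.
move: tp; set w := sqnorm (_ - _ - _) => tp.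
rewrite eM.
have e1 : (M + 1) * t = 1 by rewrite /t eM mulfV //; apply/lt0r_neq0; lra.
set sa := sqnorm (x m.+1 - z) in tp *; set sb := sqnorm (xbar x m - z) in IH tp *.
have -> : (M + 1) * (t * sa + (1 - t) * sb - t * (1 - t) * w) =
   ((M+1) * t) * sa + ((M + 1) - (M+1) * t) * sb - (M+1) * (t * (1 - t) * w) by ring.
rewrite e1.
have := mulr_ge0 (addr_ge0 hM ler01) tp.
set S := \sum_(_ <= _ < _ | _) _ in IH *.
move: ((M + 1) * (t * (1 - t) * w)) => W.
have -> : M + 1 - 1 = M by ring.
move: (M * sb) IH => P IH. lra.
Qed.
End S.

Theorem mainTheorem10 (R : realType) (n : nat) (rho : R) (f : 'rV[R]_n -> R)
    (x : nat -> 'rV[R]_n) (N : nat) :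
  rho_convex rho f -> (1 <= N)%N ->
  let fbar := (N%:R)^-1 * \sum_(1 <= i < N.+1) f (x i) in
  f (xbar x N) <= fbar - rho / (2 * N%:R) *
      \sum_(1 <= i < N.+1) ((i%:R - 1) / i%:R) * sqnorm (x i - xbar x i.-1)
  /\
  forall z : 'rV[R]_n,
    f (xbar x N) <= fbar + Num.max 0 (- rho) *
      ((N%:R)^-1 * \sum_(1 <= i < N.+1) sqnorm (x i - z)
       + (N%:R)^-1 * \sum_(1 <= i < N.+1)
            ((i%:R)^-1 * \sum_(1 <= j < i) sqnorm (x j - z))).
Proof.
move=> hc hN fbar; rewrite /fbar; clear fbar.
have P1 := @part1_ind _ _ rho f x hc N.
have Npos : (0 : R) < N%:R by rewrite ltr0n.
have hNi : 0 <= (N%:R : R)^-1 by rewrite invr_ge0 ler0n.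
set SF := \sum_(1 <= i < N.+1) _ in P1 *.
set C := \sum_(1 <= i < N.+1) _ in P1 *.
have part1 : f (xbar x N) <= N%:R^-1 * SF - rho / (2 * N%:R) * C.
  have -> : f (xbar x N) = N%:R^-1 * (N%:R * f (xbar x N)).
    by rewrite mulrA mulVf ?mul1r // lt0r_neq0.
  have -> : N%:R^-1 * SF - rho / (2 * N%:R) * C = N%:R^-1 * (SF - rho / 2 * C).
    by field; apply/lt0r_neq0.
  by apply: ler_wpM2l.
split => // z.
have C0 : 0 <= C.
  rewrite /C big_nat_cond; apply: sumr_ge0 => i /andP[/andP[hi _] _].
  apply: mulr_ge0; last exact: sqnorm_ge0.
  by apply: divr_ge0; rewrite ?ler0n // subr_ge0 ler1n.
case: (lerP 0 rho) => hr.
  rewrite max_l; last by rewrite oppr_le0.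
  have : 0 <= rho / (2 * N%:R) * C by rewrite mulr_ge0 // divr_ge0 // mulr_ge0 // ltW.
  move: (rho / (2 * N%:R) * C) part1 => W; rewrite mul0r addr0; lra.
rewrite max_r; last by rewrite oppr_ge0 ltW.
set A := \sum_(1 <= i < N.+1) sqnorm (x i - z).
set B := \sum_(1 <= i < N.+1) _.
have CAB : C <= 2 * (A + B).
  rewrite mulrDr !mulr_sumr -big_split /=.
  apply: ler_sum_nat => i /andP[hi _].
  case: i hi => [//|k] _.
  have J := @jensen_ind _ _ x z k.
  set S := \sum_(1 <= j < k.+1) _ in J *.
  set K := (k%:R : R) in J.
  have hK : 0 <= K by rewrite ler0n.
  have eK : (k.+1%:R : R) = K + 1 by rewrite mulrSr.
  have hs : sqnorm (x k.+1 - xbar x k) <= 2 * sqnorm (x k.+1 - z) + 2 * sqnorm (xbar x k - z).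
    have -> : x k.+1 - xbar x k = (x k.+1 - z) + (z - xbar x k) by rewrite addrA subrK.
    by rewrite (@sqnormB _ _ (xbar x k)); apply: sqnorm_add_le.
  rewrite /= eK.
  have ha := @sqnorm_ge0 _ _ (x k.+1 - z).
  move: hs ha J; set s := sqnorm (x k.+1 - xbar x k); set a := sqnorm (x k.+1 - z);
    set w := sqnorm (xbar x k - z) => hs ha J.
  have hq : 0 < K + 1 by lra.
  have -> : (K + 1 - 1) / (K + 1) * s = (K + 1)^-1 * (K * s).
    by field; apply/lt0r_neq0.
  have -> : 2 * a + 2 * ((K + 1)^-1 * S) = (K + 1)^-1 * (2 * (K + 1) * a + 2 * S).
    by field; apply/lt0r_neq0.
  apply: ler_wpM2l; first by rewrite invr_ge0 ltW.
  nra.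
have -> : - rho * (N%:R^-1 * A + N%:R^-1 * B) = (- rho / (2 * N%:R)) * (2 * (A + B)).
  by field; apply/lt0r_neq0.
have h2 : - rho / (2 * N%:R) * C <= (- rho / (2 * N%:R)) * (2 * (A + B)).
  have hk : 0 <= - rho / (2 * N%:R) by apply: divr_ge0; lra.
  by apply: ler_wpM2l.
move: h2 part1; rewrite mulNr.
move: (rho / (2 * N%:R)) (2 * (A + B)) (f (xbar x N)) (N%:R^-1 * SF) => r D F G; nra.
Qed.
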